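(* Let $T$ be a basic maximal rigid object of $\mathcal{C}_n$ with top summand $T_1=(1,n-1)$, let $*$ be either $\mathcal{T}$ or $\mathcal{D}$, and let $X\in\mathcal{F}$. (i) $R(X)\cap\operatorname{add}T$ is empty if and only if $X\in\operatorname{add}\tau T$. (ii) For any $T$-subwing triple $(T_i;T_j,T_k)$, at most one of $T_j$ and $T_k$ lies in $R^*(X)$. (iii) If $R^*(X)\cap\operatorname{add}T$ is non-empty, there is a unique string in the quiver of $\Lambda_T$ which traverses each of the vertices corresponding to the indecomposables in $R^*(X)\cap\operatorname{add}T$ exactly once, traverses no other vertex, and ends in the vertex corresponding to the summand in $R^*(X)\cap\operatorname{add}T$ of highest quasilength. (iv) A string as in (iii) contains no $\mathcal{D}$-arrow and no inverse of a $\mathcal{D}$-arrow.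
   Context: Let $k$ be algebraically closed, $n\ge2$, $\mathcal{T}_n$ the tube of rank $n$ (finite-dimensional nilpotent representations of the cyclically oriented $\tilde A_{n-1}$-quiver; AR-translation $\tau$), $\mathcal{C}_n=D^b(\mathcal{T}_n)/\tau^{-1}[1]$ the cluster tube, with indecomposables identified with those of $\mathcal{T}_n$. Indecomposables have coordinates $(a,b)$, $a\in\mathbb{Z}/n$ (represented in $\{1,\dots,n\}$), $b\ge1$ the quasilength, with $\tau(a,b)=(a-1,b)$ and irreducible maps $(a,b)\to(a,b+1)$, $(a,b)\to(a+1,b-1)$. For indecomposables $X,Y$, $\operatorname{Hom}_{\mathcal{C}_n}(X,Y)=\operatorname{Hom}_{\mathcal{T}_n}(X,Y)\oplus\operatorname{Hom}_{D^b}(X,\tau^{-1}Y[1])$; elements of the first summand are $\mathcal{T}$-maps, of the second $\mathcal{D}$-maps. $R^{\mathcal{T}}(X)$ (resp. $R^{\mathcal{D}}(X)$) is the set of indecomposables with a nonzero $\mathcal{T}$-map (resp. $\mathcal{D}$-map) to $X$, and $R(X)=R^{\mathcal{T}}(X)\cup R^{\mathcal{D}}(X)$. Wing of $X=(a,i)$, $i\le n-1$: $\mathcal{W}_X=\{(a+s,i'):s\ge0,i'\ge1,s+i'\le i\}$. $T=\bigoplus_{i=1}^{n-1}T_i$ is basic maximal rigid ($\operatorname{Ext}^1(T,T)=0$ and $\operatorname{Ext}^1(T\oplus Y,T\oplus Y)=0\Rightarrow Y\in\operatorname{add}T$); its unique summand of quasilength $n-1$ is the top summand $T_1$, all summands lie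 in $\mathcal{W}_{T_1}$, and coordinates are chosen with $T_1=(1,n-1)$. $\mathcal{F}$ is the set of indecomposables $(a,b)$, $a\in\{1,\dots,n\}$, with $b\le n-1$ or $a+b\le2n-1$. Subwing triples: non-degenerate $(X;Y,Z)$ with $X=(a,b)$, $3\le b\le n-1$, $Y=(a,c)$, $Z=(a+c+1,b-c-1)$, $1\le c\le b-2$; degenerate: $X=(a,b)$, $2\le b\le n-1$, and $(Y,Z)=((a,b-1),0)$ or $(0,(a+1,b-1))$; a $T$-subwing triple is one whose nonzero members are summands of $T$. The quiver of $\Lambda_T=\operatorname{End}_{\mathcal{C}_n}(T)^{\mathrm{op}}$ has vertex $i$ for each $T_i$ and arrows $i\to j$ for maps $T_j\to T_i$ irreducible in $\operatorname{add}T$, called $\mathcal{T}$- or $\mathcal{D}$-arrows according to the type of map. A string is a trivial string at a vertex, or a word in arrows and formal inverses with matching endpoints, no letter followed by its inverse, and no subword of it or its inverse a zero relation of $\Lambda_T$; its traversed vertices are the endpoints of its letters. *)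

(* Defs.v *)
From mathcomp Require Import all_boot.
Set Implicit Arguments. Unset Strict Implicit. Unset Printing Implicit Defensive.

(* Indecomposable (a,b) of the tube of rank n: the ordinal i : 'I_n stands for
   the paper's coordinate a = i + 1 in {1,...,n}; b is the quasilength.
   (a,b) is the uniserial module with socle at a and composition factors at
   a, a+1, ..., a+b-1 (so (a,b) -> (a,b+1) is mono, (a,b) -> (a+1,b-1) is epi). *)
Notation ind n := ('I_n * nat)%type.

Section ClusterTube.
Variable n : nat.

Definition valid (X : ind n) : bool := 0 < X.2.

Definition shift (a : 'I_n) (k : nat) : 'I_n :=
  Ordinal (ltn_pmod (a + k) (leq_ltn_trans (leq0n a) (ltn_ord a))).

Definition tau (X : ind n) : ind n := (shift X.1 n.-1, X.2).

(* Basis of Hom_T(X,Y): index s, the map X ->> (a+s, b-s) >-> Y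
   (quotient of X of length b-s, which is a submodule of Y). *)
Definition homT_idx (X Y : ind n) (s : nat) : bool :=
  [&& s < X.2, shift X.1 s == Y.1 & X.2 - s <= Y.2].

(* A basis morphism of C_n: (true, s) is the T-map of index s;
   (false, s) is the D-map dual (Serre duality
   Hom_D(X, tau^-1 Y [1]) = Ext^1(X, tau^-1 Y) ~ D Hom_T(Y, tau^2 X))
   to the T-basis map of index s from Y to tau^2 X. *)
Definition mor := (bool * nat)%type.

Definition isbasis (X Y : ind n) (m : mor) : bool :=
  if m.1 then homT_idx X Y m.2 else homT_idx Y (tau (tau X)) m.2.

(* composition g o f of basis morphisms f : X -> Y, g : Y -> Z
   (None means zero; otherwise a nonzero scalar multiple of the result). *)
Definition comp (X Z : ind n) (g f : mor) : option mor :=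
  match f.1, g.1 with
  | true, true => if f.2 + g.2 < X.2 then Some (true, f.2 + g.2) else None
  | false, true =>
      if (g.2 <= f.2) && isbasis X Z (false, f.2 - g.2)
      then Some (false, f.2 - g.2) else None
  | true, false =>
      if (f.2 <= g.2) && isbasis X Z (false, g.2 - f.2)
      then Some (false, g.2 - f.2) else None
  | false, false => None
  end.

Definition homC_nz (X Y : ind n) : Prop := exists m, isbasis X Y m.

(* Ext^1_C(X,Y) = Hom_C(X, Y[1]) and [1] = tau in C_n *)
Definition ext1_nz (X Y : ind n) : Prop := homC_nz X (tau Y).

Definition rigid (T : seq (ind n)) : Prop :=
  forall X Y, X \in T -> Y \in T -> ~ ext1_nz X Y.

Definition maxrigid (T : seq (ind n)) : Prop :=
  [/\ uniq T, all valid T, rigid T &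
   forall Y, valid Y ->
     (forall X, X \in T -> ~ ext1_nz X Y /\ ~ ext1_nz Y X) ->
     ~ ext1_nz Y Y -> Y \in T].

(* R^*(X): k = true for *=T, k = false for *=D *)
Definition inRk (k : bool) (X Y : ind n) : Prop :=
  valid Y /\ exists s, isbasis Y X (k, s).
Definition inR (X Y : ind n) : Prop := inRk true X Y \/ inRk false X Y.

(* the set F (paper coordinate a = X.1 + 1) *)
Definition inF (X : ind n) : Prop :=
  valid X /\ (X.2 <= n.-1 \/ X.1 + 1 + X.2 <= 2 * n - 1).

(* subwing triples; None stands for the zero object *)
Definition subwing (X : ind n) (Y Z : option (ind n)) : Prop :=
  (exists c, [/\ 3 <= X.2 <= n.-1, 1 <= c <= X.2 - 2,
      Y = Some (X.1, c) & Z = Some (shift X.1 (c + 1), X.2 - c - 1)])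
  \/ (2 <= X.2 <= n.-1 /\
      ((Y = Some (X.1, X.2 - 1) /\ Z = None) \/
       (Y = None /\ Z = Some (shift X.1 1, X.2 - 1)))).

Definition optin (T : seq (ind n)) (o : option (ind n)) : Prop :=
  match o with Some W => W \in T | None => True end.

Definition T_subwing (T : seq (ind n)) X Y Z : Prop :=
  subwing X Y Z /\ X \in T /\ optin T Y /\ optin T Z.

Definition optR (k : bool) (X : ind n) (o : option (ind n)) : Prop :=
  match o with Some W => inRk k X W | None => False end.

Definition rad (X Y : ind n) (m : mor) : bool :=
  isbasis X Y m && ~~ ((X == Y) && (m == (true, 0))).

Definition inrad2 (T : seq (ind n)) (X Y : ind n) (m : mor) : Prop :=
  exists Z, Z \in T /\ exists f g, [/\ rad X Z f, rad Z Y g & comp X Y g f = Some m].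

Definition irred (T : seq (ind n)) (X Y : ind n) (m : mor) : Prop :=
  [/\ X \in T, Y \in T, rad X Y m & ~ inrad2 T X Y m].

(* arrow asrc -> atgt of the quiver, given by the irreducible map
   amap : atgt -> asrc; it is a T-arrow iff (amap).1 = true *)
Record arrow := Arrow { asrc : ind n; atgt : ind n; amap : mor }.
Definition is_arrow (T : seq (ind n)) (a : arrow) : Prop :=
  irred T (atgt a) (asrc a) (amap a).

(* composite map of a path a :: ps (arrows in path order,
   asrc of each arrow = atgt of the previous one), a map atgt(last) -> asrc a *)
Fixpoint pathcomp (a : arrow) (ps : seq arrow) : option mor :=
  match ps with
  | [::] => Some (amap a)
  | b :: ps' =>
      match pathcomp b ps' with
      | Some m => comp (atgt (last b ps')) (asrc a) (amap a) m
      | None => None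
      end
  end.

Definition nonzero_path (ps : seq arrow) : Prop :=
  match ps with [::] => True | a :: ps' => pathcomp a ps' <> None end.

(* letters: an arrow (ldir = true) or its formal inverse (ldir = false) *)
Record letter := Letter { larr : arrow; ldir : bool }.
Definition lfrom (l : letter) := if ldir l then asrc (larr l) else atgt (larr l).
Definition lto (l : letter) := if ldir l then atgt (larr l) else asrc (larr l).

Record str := Str { sstart : ind n; sletters : seq letter }.

Fixpoint walk (T : seq (ind n)) (v : ind n) (ls : seq letter) : Prop :=
  match ls with
  | [::] => v \in T
  | l :: ls' => [/\ v \in T, is_arrow T (larr l), lfrom l = v & walk T (lto l) ls']
  end.

Fixpoint noinv (ls : seq letter) : Prop :=
  match ls with
  | l :: ((l' :: _) as ls') =>
      ~ (larr l = larr l' /\ ldir l <> ldir l') /\ noinv ls'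
  | _ => True
  end.

(* no subword which is (or whose inverse is) a zero relation *)
Definition nozero (ls : seq letter) : Prop :=
  forall i j, let seg := take j (drop i ls) in
    (all ldir seg -> nonzero_path (map larr seg)) /\
    (all (fun l => ~~ ldir l) seg -> nonzero_path (rev (map larr seg))).

Definition isString (T : seq (ind n)) (s : str) : Prop :=
  [/\ walk T (sstart s) (sletters s), noinv (sletters s) & nozero (sletters s)].

Definition verts (s : str) : seq (ind n) := sstart s :: map lto (sletters s).
Definition send (s : str) : ind n := last (sstart s) (map lto (sletters s)).

Definition good_string (T : seq (ind n)) (k : bool) (X Y : ind n) (s : str) : Prop :=
  [/\ isString T s, uniq (verts s),
      (forall Z, Z \in verts s <-> (Z \in T /\ inRk k X Z)) & send s = Y].

Definition no_D_letter (s : str) : Prop :=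
  all (fun l => (amap (larr l)).1) (sletters s).

End ClusterTube.

(* Main.v *)
Require Import Defs.
From mathcomp Require Import all_boot zify.
Set Implicit Arguments. Unset Strict Implicit. Unset Printing Implicit Defensive.

Lemma ind_eq n (U V : ind n) : (U.1 : nat) = V.1 -> U.2 = V.2 -> U = V.
Proof. by case: U V => [a b] [c d] /= /val_inj -> ->. Qed.

Lemma homT_iff n (X Y : ind n) s :
  homT_idx X Y s <-> [/\ s < X.2, (X.1 + s) %% n = Y.1 & X.2 - s <= Y.2].
Proof.
rewrite /homT_idx; split.
- by case/and3P => h1 /eqP h2 h3; split => //; rewrite -h2.
- by case=> h1 h2 h3; apply/and3P; split => //; apply/eqP/val_inj.
Qed.

Lemma tau1 n (Y : ind n) : ((tau Y).1 : nat) = (Y.1 + n.-1) %% n.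
Proof. by []. Qed.
Lemma tau2 n (Y : ind n) : (tau Y).2 = Y.2.
Proof. by []. Qed.

Lemma modn_2n a n : a < n + n -> (a < n /\ a %% n = a) \/ (n <= a /\ a %% n = a - n).
Proof.
move=> h; case: (ltnP a n) => h1; first by left; rewrite modn_small.
right; split => //; have e : a = (a - n) + n by lia.
by rewrite {1}e modnDr modn_small; lia.
Qed.

Lemma tt1 n (Y : ind n) : 2 <= n -> ((tau (tau Y)).1 : nat) = (Y.1 + (n - 2)) %% n.
Proof.
move=> hn; rewrite tau1 tau1 modnDml.
have e : Y.1 + n.-1 + n.-1 = (Y.1 + (n-2)) + n by lia.
by rewrite e modnDr.
Qed.

Lemma homT_wing n (U V : ind n) s : U.1 + U.2 <= n.-1 ->
  homT_idx U V s <-> [/\ (V.1 : nat) = U.1 + s, s < U.2 & U.1 + U.2 <= V.1 + V.2].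
Proof.
move=> hw; rewrite homT_iff; split.
- case=> h1 h2 h3; rewrite modn_small in h2; [split; lia|lia].
- case=> h1 h2 h3; split => //; [rewrite modn_small; lia | lia].
Qed.

Lemma homT_tau n (A B : ind n) s : homT_idx A B s <-> homT_idx (tau A) (tau B) s.
Proof.
rewrite !homT_iff !tau1 !tau2 modnDml.
have e : A.1 + n.-1 + s = (A.1 + s) + n.-1 by lia.
rewrite e; split.
- by case=> h1 h2 h3; split => //; rewrite -h2 modnDml.
- case=> h1 h2 h3; split => //.
  have : (A.1 + s + n.-1 == B.1 + n.-1 %[mod n]) by apply/eqP.
  by rewrite eqn_modDr (modn_small (ltn_ord B.1)) => /eqP.
Qed.

Lemma ext_sym n (A B : ind n) : ext1_nz A B -> ext1_nz B A.
Proof.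
rewrite /ext1_nz /homC_nz; case=> [[[] s] h].
- by exists (false, s); rewrite /isbasis /= in h *; exact: (homT_tau A (tau B) s).1 h.
- by exists (true, s); rewrite /isbasis /= in h *; exact: (homT_tau B (tau A) s).2 h.
Qed.

Definition wing n (Y : ind n) := 0 < Y.2 /\ Y.1 + Y.2 <= n.-1.
Definition cross n (U V : ind n) : Prop :=
  (U.1 < V.1 /\ V.1 <= U.1 + U.2 /\ U.1 + U.2 < V.1 + V.2) \/
  (V.1 < U.1 /\ U.1 <= V.1 + V.2 /\ V.1 + V.2 < U.1 + U.2).

Lemma tauv n (a : 'I_n) : (0 < a /\ (a + n.-1) %% n = a.-1) \/ (a = 0 :> nat /\ (a + n.-1) %% n = n.-1).
Proof.
have h := ltn_ord a.
have [[h1 ->]|[h1 ->]] := @modn_2n (a + n.-1) n ltac:(lia).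
- right; lia.
- left; lia.
Qed.

Lemma T_cross n (U V : ind n) s : wing U -> wing V -> homT_idx U (tau V) s ->
  U.1 < V.1 /\ V.1 <= U.1 + U.2 /\ U.1 + U.2 < V.1 + V.2.
Proof.
case=> hu1 hu2 [hv1 hv2] /(homT_wing _ _ hu2) [h1 h2 h3].
rewrite tau1 tau2 in h1 h3.
have [[a1 a2]|[a1 a2]] := tauv V.1; rewrite a2 in h1 h3; lia.
Qed.

Lemma ext_cross n (U V : ind n) : wing U -> wing V -> ext1_nz U V -> cross U V.
Proof.
move=> hu hv; rewrite /ext1_nz /homC_nz; case=> [[[] s] h]; rewrite /isbasis /= in h.
- by left; apply: T_cross h.
- by right; apply: (T_cross hv hu (proj2 (homT_tau V (tau U) s) h)).
Qed.

Lemma cross_ext n (U V : ind n) : wing U ->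
  U.1 < V.1 /\ V.1 <= U.1 + U.2 /\ U.1 + U.2 < V.1 + V.2 -> ext1_nz U V.
Proof.
case=> hu1 hu2 h; rewrite /ext1_nz /homC_nz.
exists (true, V.1.-1 - U.1); rewrite /isbasis /=.
apply/(homT_wing _ _ hu2); rewrite tau1 tau2.
have [[a1 a2]|[a1 a2]] := tauv V.1; rewrite a2; split; lia.
Qed.

Lemma cross_ext2 n (U V : ind n) : wing U -> wing V -> cross U V -> ext1_nz U V.
Proof.
move=> hu hv [h|h]; first exact: cross_ext.
by apply: ext_sym; apply: cross_ext.
Qed.

Lemma T_wing n (T : seq (ind n)) (T1 Y : ind n) : 2 <= n -> maxrigid T -> T1 \in T ->
  (T1.1 : nat) = 0 -> T1.2 = n.-1 -> Y \in T -> wing Y.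
Proof.
move=> hn [hu hv hr hm] hT1 e1 e2 hY.
have vY : 0 < Y.2 by move/allP: hv => /(_ Y hY).
have hl : Y.2 <= n.-1.
  case: (leqP Y.2 n.-1) => // hc; exfalso; apply: (hr Y Y hY hY).
  rewrite /ext1_nz /homC_nz; exists (true, n.-1); rewrite /isbasis /=.
  by apply/homT_iff; split; [lia | rewrite tau1 | rewrite tau2; lia].
split => //; case: (leqP (Y.1 + Y.2) n.-1) => // hc; exfalso.
apply: (hr T1 Y hT1 hY); apply: cross_ext.
- rewrite /wing e1 e2; split; lia.
- rewrite e1 e2; have := ltn_ord Y.1; lia.
Qed.

Definition EE n (X : ind n) := (X.1 + X.2 + 2) %% n.
Definition Pb n (k : bool) (X : ind n) (U : ind n) : bool :=
  if k then (U.1 <= X.1) && (X.1 < U.1 + U.2) && (U.1 + U.2 <= X.1 + X.2)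
  else (U.1 < EE X) && (EE X <= U.1 + U.2) && (EE X <= U.1 + X.2).
Definition pt n k (X : ind n) : nat := if k then (X.1 : nat) else (EE X).-1.
Definition sub n (U V : ind n) := V.1 <= U.1 /\ U.1 + U.2 <= V.1 + V.2.

Lemma Pb_char n k (X U : ind n) : 2 <= n -> wing U ->
  (exists s, isbasis U X (k, s)) <-> Pb k X U.
Proof.
move=> hn [hu1 hu2]; case: k; rewrite /isbasis /Pb /=.
- split.
  + by case=> s /(homT_wing _ _ hu2) [h1 h2 h3]; lia.
  + move=> h; exists (X.1 - U.1); apply/(homT_wing _ _ hu2); split; lia.
- split.
  + case=> s /homT_iff [h1 h2 h3]; rewrite tt1 // !tau2 in h2 h3.
    have e : EE X = U.1 + (X.2 - s).
      rewrite /EE; have -> : X.1 + X.2 + 2 = (X.1 + s) + (X.2 - s + 2) by lia.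
      rewrite -modnDml h2 modnDml.
      have -> : U.1 + (n-2) + (X.2 - s + 2) = (U.1 + (X.2 - s)) + n by lia.
      rewrite modnDr modn_small //; lia.
    rewrite e; lia.
  + set E := EE X => h.
    have hE : E < n by rewrite /E /EE ltn_mod; lia.
    exists (X.2 - (E - U.1)); apply/homT_iff; rewrite tt1 // !tau2; split; [lia| |lia].
    apply/eqP; rewrite -(eqn_modDr ((E - U.1) + 2)).
    have -> : X.1 + (X.2 - (E - U.1)) + (E - U.1 + 2) = X.1 + X.2 + 2 by lia.
    have -> : U.1 + (n-2) + (E - U.1 + 2) = (U.1 + (E - U.1)) + n by lia.
    rewrite modnDr (@modn_small (U.1 + (E - U.1))); last lia.
    apply/eqP; rewrite -/(EE X) -/E; lia.
Qed.

Lemma Pb_pt n k (X U : ind n) : Pb k X U -> U.1 <= pt k X < U.1 + U.2.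
Proof. by case: k; rewrite /Pb /pt; lia. Qed.

Lemma Pb_conv n k (X U V Z : ind n) : Pb k X U -> Pb k X V -> sub U Z -> sub Z V -> Pb k X Z.
Proof. by rewrite /sub; case: k; rewrite /Pb; lia. Qed.

Definition setup n (T : seq (ind n)) (T1 : ind n) :=
  [/\ 2 <= n, maxrigid T, T1 \in T, (T1.1 : nat) = 0 & T1.2 = n.-1].

Definition consec n (T : seq (ind n)) (U V : ind n) :=
  forall W : ind n, W \in T -> sub U W -> sub W V ->
    ((W.1 : nat) = U.1 /\ W.2 = U.2) \/ ((W.1 : nat) = V.1 /\ W.2 = V.2).

Lemma Tw n (T : seq (ind n)) T1 (Y : ind n) : setup T T1 -> Y \in T -> wing Y.
Proof. by case=> hn hm h1 e1 e2 hY; apply: (T_wing hn hm h1 e1 e2 hY). Qed.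

Lemma nocross n (T : seq (ind n)) T1 (U V : ind n) : setup T T1 -> U \in T -> V \in T -> ~ cross U V.
Proof.
move=> hs hU hV hc; case: (hs) => hn [_ _ hr _] _ _ _.
by apply: (hr U V hU hV); apply: cross_ext2 => //; apply: Tw hs _.
Qed.

Lemma nested n (T : seq (ind n)) T1 (U V : ind n) p : setup T T1 -> U \in T -> V \in T ->
  U.1 <= p < U.1 + U.2 -> V.1 <= p < V.1 + V.2 -> sub U V \/ sub V U.
Proof.
move=> hs hU hV h1 h2; have := nocross hs hU hV; rewrite /cross /sub; lia.
Qed.

Lemma neq_ind n (U V : ind n) : ~ ((U.1 : nat) = V.1 /\ U.2 = V.2) -> (U == V) = false.
Proof. by move=> h; apply/negP => /eqP e; apply: h; rewrite e. Qed.

Lemma share n (T : seq (ind n)) T1 (U V : ind n) : setup T T1 -> U \in T -> V \in T ->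
  sub U V -> ~ ((U.1 : nat) = V.1 /\ U.2 = V.2) -> consec T U V ->
  (U.1 : nat) = V.1 \/ U.1 + U.2 = V.1 + V.2.
Proof.
move=> hs hU hV hsub hne hc.
case: (boolP ((U.1 : nat) == V.1)) => [/eqP -> |h1]; first by left.
case: (boolP (U.1 + U.2 == V.1 + V.2)) => [/eqP -> |h2]; first by right.
exfalso; move/eqP: h1 => h1; move/eqP: h2 => h2.
have [wU1 wU2] := Tw hs hU; have [wV1 wV2] := Tw hs hV.
case: (hs) => hn [_ _ hr hm] _ _ _.
pose Z : ind n := (V.1, U.1 + U.2 - V.1).
have wZ : wing Z by rewrite /wing /=; move: hsub; rewrite /sub; lia.
have hZ : Z \in T.
  apply: hm; first by rewrite /valid /=; move: hsub; rewrite /sub; lia.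
  - move=> W hW; have wW := Tw hs hW.
    have c1 := nocross hs hW hU; have c2 := nocross hs hW hV.
    have c3 := hc W hW.
    split => he.
    + have := ext_cross wW wZ he; move: c1 c2 c3 hsub hne; rewrite /cross /sub /=; lia.
    + have := ext_cross wZ wW he; move: c1 c2 c3 hsub hne; rewrite /cross /sub /=; lia.
  - by move=> he; have := ext_cross wZ wZ he; rewrite /cross; lia.
have := hc Z hZ; move: hsub; rewrite /sub /=; lia.
Qed.

Lemma radI n (U V : ind n) m : isbasis U V m ->
  ~ ((U.1 : nat) = V.1 /\ U.2 = V.2) \/ m.1 = false -> rad U V m.
Proof.
move=> hb h; rewrite /rad hb /=; case: h => [h|h].
- by rewrite neq_ind.
- by apply/negP => /andP [_ /eqP e]; rewrite e in h.
Qed.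

Lemma neqI n (U V : ind n) : U <> V -> ~ ((U.1 : nat) = V.1 /\ U.2 = V.2).
Proof. by move=> h [h1 h2]; apply: h; apply: ind_eq. Qed.

Lemma radE n (U V : ind n) m : rad U V m -> isbasis U V m /\ (U = V -> m <> (true, 0)).
Proof.
case/andP => hb hn; split => // e em; move: hn; by rewrite e em eqxx.
Qed.

Lemma loopT1 n (T : seq (ind n)) T1 : setup T T1 -> rad T1 T1 (false, n - 2).
Proof.
case=> hn _ _ e1 e2; apply: radI; last by right.
rewrite /isbasis /=; apply/homT_wing; first lia.
rewrite tt1 // !tau2 e1 add0n (@modn_small (n - 2) n); [split; lia | lia].
Qed.

Lemma G3D n (T : seq (ind n)) T1 (U V : ind n) m : setup T T1 -> irred T U V m ->
  sub U V \/ sub V U -> U <> V -> m.1 = true.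
Proof.
move=> hs [hU hV hr hn] hsub hne; case: m hr hn => [[] s] // hr hn.
have [wU1 wU2] := Tw hs hU; have [wV1 wV2] := Tw hs hV.
case: (hs) => hn2 _ hT1 e1 e2.
have [hb _] := radE hr.
have hb' := hb; rewrite /isbasis /= in hb'.
move/(homT_wing _ _ wV2): hb' => [h1 h2 h3]; rewrite tt1 // !tau2 in h1 h3.
have [[a1 a2]|[a1 a2]] := @modn_2n (U.1 + (n-2)) n ltac:(lia); rewrite a2 in h1 h3; last first.
  by move: hsub; rewrite /sub; lia.
exfalso; apply: hn; exists T1; split => //.
case: hsub => hsub.
- have eV : V = T1 by apply: ind_eq; move: hsub; rewrite /sub; lia.
  subst V; exists (true, 0), (false, n - 2); split.
  + apply: radI; last by left; apply: neqI.
    by rewrite /isbasis /=; apply/(homT_wing _ _ wU2); split; lia.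
  + exact: loopT1 hs.
  + rewrite /Defs.comp /=; have -> : n - 2 - 0 = s by lia.
    by rewrite hb.
- have eU : U = T1 by apply: ind_eq; move: hsub; rewrite /sub; lia.
  subst U; exists (false, n - 2), (true, (V.1 : nat)); split.
  + exact: loopT1 hs.
  + apply: radI; last by left; apply: neqI => e; apply: hne.
    by rewrite /isbasis /=; apply/homT_wing; [lia| split; lia].
  + rewrite /Defs.comp /=; have -> : n - 2 - V.1 = s by lia.
    have -> : V.1 <= n - 2 by lia.
    by rewrite hb.
Qed.

Lemma comp_true n (X Z : ind n) f g t : Defs.comp X Z g f = Some (true, t) ->
  [/\ f.1 = true, g.1 = true, t = f.2 + g.2 & f.2 + g.2 < X.2].
Proof.
case: f => [[] a]; case: g => [[] b]; rewrite /Defs.comp /=.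
- by case: ifP => // h [<-].
- by case: ifP.
- by case: ifP.
- by [].
Qed.

Lemma G3a n (T : seq (ind n)) T1 (U V : ind n) s : setup T T1 -> irred T U V (true, s) ->
  sub U V -> U <> V -> consec T U V.
Proof.
move=> hs [hU hV hr hn] hsub hne W hW h1 h2.
have [wU1 wU2] := Tw hs hU; have [wV1 wV2] := Tw hs hV; have [wW1 wW2] := Tw hs hW.
have [hb _] := radE hr; rewrite /isbasis /= in hb.
move/(homT_wing _ _ wU2): hb => [b1 b2 b3].
move: hsub h1 h2; rewrite /sub => hsub h1 h2.
have es : s = 0 by lia. subst s.
case: (boolP (((W.1 : nat) == U.1) && (W.2 == U.2))) => [/andP[/eqP a /eqP b]|c1]; first by left.
case: (boolP (((W.1 : nat) == V.1) && (W.2 == V.2))) => [/andP[/eqP a /eqP b]|c2]; first by right.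
exfalso; apply: hn; exists W; split => //; exists (true, 0), (true, 0); split.
- apply: radI; last by left; move: c1; lia.
  by rewrite /isbasis /=; apply/(homT_wing _ _ wU2); split; lia.
- apply: radI; last by left; move: c2; lia.
  by rewrite /isbasis /=; apply/(homT_wing _ _ wW2); split; lia.
- by rewrite /Defs.comp /= wU1.
Qed.

Lemma G3b n (T : seq (ind n)) T1 (U V : ind n) s : setup T T1 -> irred T U V (true, s) ->
  sub V U -> U <> V -> consec T V U.
Proof.
move=> hs [hU hV hr hn] hsub hne W hW h1 h2.
have [wU1 wU2] := Tw hs hU; have [wV1 wV2] := Tw hs hV; have [wW1 wW2] := Tw hs hW.
have [hb _] := radE hr; rewrite /isbasis /= in hb.
move/(homT_wing _ _ wU2): hb => [b1 b2 b3].
move: hsub h1 h2; rewrite /sub => hsub h1 h2.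
case: (boolP (((W.1 : nat) == V.1) && (W.2 == V.2))) => [/andP[/eqP a /eqP b]|c1]; first by left.
case: (boolP (((W.1 : nat) == U.1) && (W.2 == U.2))) => [/andP[/eqP a /eqP b]|c2]; first by right.
exfalso; apply: hn; exists W; split => //; exists (true, W.1 - U.1), (true, V.1 - W.1); split.
- apply: radI; last by left; move: c2; lia.
  by rewrite /isbasis /=; apply/(homT_wing _ _ wU2); split; lia.
- apply: radI; last by left; move: c1; lia.
  by rewrite /isbasis /=; apply/(homT_wing _ _ wW2); split; lia.
- rewrite /Defs.comp /= ifT; last lia.
  by do 2 f_equal; lia.
Qed.

Definition canon n (A B : ind n) : letter n :=
  if A.1 == B.1 then Letter (Arrow B A (true, 0)) false
  else Letter (Arrow A B (true, A.1 - B.1)) true.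

Lemma canon_ok n (T : seq (ind n)) T1 (A B : ind n) : setup T T1 -> A \in T -> B \in T ->
  sub A B -> A <> B -> consec T A B ->
  [/\ lfrom (canon A B) = A, lto (canon A B) = B & is_arrow T (larr (canon A B))].
Proof.
move=> hs hA hB hsub hne hc.
have [wA1 wA2] := Tw hs hA; have [wB1 wB2] := Tw hs hB.
have hsh := share hs hA hB hsub (neqI hne) hc.
move: (hsub) => [s1 s2].
rewrite /canon; case: eqP => [e|e]; split => //; rewrite /is_arrow /=; split => //.
- have e' : (A.1 : nat) = B.1 by rewrite e.
  apply: radI; last by left; apply: neqI.
  by rewrite /isbasis /=; apply/(homT_wing _ _ wA2); split; lia.
- have e' : (A.1 : nat) = B.1 by rewrite e.
  case=> Z [hZ [f [g [hf hg hcomp]]]].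
  have [f1 g1 ft fg] := comp_true hcomp.
  case: f f1 hf ft fg hcomp => fb f2 /= -> hf ft fg hcomp.
  case: g g1 hg ft fg hcomp => gb g2 /= -> hg ft fg hcomp.
  have ef2 : f2 = 0 by lia. have eg2 : g2 = 0 by lia. subst f2 g2.
  have [wZ1 wZ2] := Tw hs hZ.
  have [hbf nf] := radE hf; have [hbg ng] := radE hg.
  rewrite /isbasis /= in hbf hbg.
  move/(homT_wing _ _ wA2): hbf => [c1 c2 c3].
  move/(homT_wing _ _ wZ2): hbg => [d1 d2 d3].
  have := hc Z hZ; rewrite /sub; case; [lia|lia|move=> [x1 x2]|move=> [x1 x2]].
  + by apply: nf => //; apply: ind_eq.
  + by apply: ng => //; apply: ind_eq.
- have e' : (A.1 : nat) <> B.1 by move=> h; apply: e; apply: val_inj.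
  apply: radI; last by left; lia.
  by rewrite /isbasis /=; apply/(homT_wing _ _ wB2); split; lia.
- have e' : (A.1 : nat) <> B.1 by move=> h; apply: e; apply: val_inj.
  case=> Z [hZ [f [g [hf hg hcomp]]]].
  have [f1 g1 ft fg] := comp_true hcomp.
  case: f f1 hf ft fg hcomp => fb f2 /= -> hf ft fg hcomp.
  case: g g1 hg ft fg hcomp => gb g2 /= -> hg ft fg hcomp.
  have [wZ1 wZ2] := Tw hs hZ.
  have [hbf nf] := radE hf; have [hbg ng] := radE hg.
  rewrite /isbasis /= in hbf hbg.
  move/(homT_wing _ _ wB2): hbf => [c1 c2 c3].
  move/(homT_wing _ _ wZ2): hbg => [d1 d2 d3].
  have := hc Z hZ; rewrite /sub; case; [lia|lia|move=> [x1 x2]|move=> [x1 x2]].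
  + have eg : g2 = 0 by lia. subst g2.
    by apply: ng => //; apply: ind_eq.
  + have ef : f2 = 0 by lia. subst f2.
    by apply: nf => //; apply: ind_eq.
Qed.

Lemma letter_char n (T : seq (ind n)) T1 (A B : ind n) (l : letter n) : setup T T1 ->
  A \in T -> B \in T -> sub A B -> A <> B -> is_arrow T (larr l) ->
  lfrom l = A -> lto l = B -> l = canon A B.
Proof.
move=> hs hA hB hsub hne.
have [wA1 wA2] := Tw hs hA; have [wB1 wB2] := Tw hs hB.
move: (hsub) => [s1 s2].
case: l => [[src tgt m] d]; rewrite /lfrom /lto /is_arrow /=; case: d => /= ha hf ht; subst.
- have m1 := G3D hs ha (or_intror hsub) (fun e => hne (esym e)).
  case: m m1 ha => mb ms /= -> ha.
  case: ha => _ _ hr _; have [hb _] := radE hr; rewrite /isbasis /= in hb.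
  move/(homT_wing _ _ wB2): hb => [c1 c2 c3].
  rewrite /canon; case: eqP => [e|e].
  + have e' : (A.1 : nat) = B.1 by rewrite e.
    by exfalso; apply: hne; apply: ind_eq; lia.
  + by do 3 f_equal; lia.
- have m1 := G3D hs ha (or_introl hsub) hne.
  case: m m1 ha => mb ms /= -> ha.
  case: ha => _ _ hr _; have [hb _] := radE hr; rewrite /isbasis /= in hb.
  move/(homT_wing _ _ wA2): hb => [c1 c2 c3].
  rewrite /canon; case: eqP => [e|e].
  + by do 3 f_equal; lia.
  + by exfalso; apply: e; apply: val_inj => /=; lia.
Qed.

Fixpoint allQ {A : Type} (P : A -> Prop) (s : seq A) : Prop :=
  match s with [::] => True | x :: s' => P x /\ allQ P s' end.

Fixpoint lnk n (s : seq (letter n)) : Prop :=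
  match s with l :: ((l' :: _) as s') => lto l = lfrom l' /\ lnk s' | _ => True end.

Lemma allQ_take A (P : A -> Prop) s j : allQ P s -> allQ P (take j s).
Proof. by elim: s j => [|x s IH] [|j] //= [h1 h2]; split => //; apply: IH. Qed.

Lemma allQ_drop A (P : A -> Prop) s j : allQ P s -> allQ P (drop j s).
Proof. by elim: s j => [|x s IH] [|j] //= [h1 h2]; apply: IH. Qed.

Lemma allQ_rcons A (P : A -> Prop) s x : allQ P (rcons s x) <-> allQ P s /\ P x.
Proof.
elim: s => [|y s IH] /=; first by split; [case | case].
rewrite IH; split; [by case=> ? [] | by case=> [[]]].
Qed.

Lemma allQ_rev A (P : A -> Prop) s : allQ P s -> allQ P (rev s).
Proof.
elim: s => [|x s IH] //= [h1 h2]; rewrite rev_cons; apply/allQ_rcons; split => //.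
exact: IH.
Qed.

Lemma allQ_last A (P : A -> Prop) x s : allQ P (x :: s) -> P (last x s).
Proof. by elim: s x => [|y s IH] x /= [h1 h2] //; apply: IH. Qed.

Lemma lnk_drop n (s : seq (letter n)) j : lnk s -> lnk (drop j s).
Proof.
elim: s j => [|x s IH] j; first by case: j.
case: j => [|j] //= h; apply: IH.
by case: s h => [|y s] //= [].
Qed.

Lemma lnk_take n (s : seq (letter n)) j : lnk s -> lnk (take j s).
Proof.
elim: s j => [|x s IH] j; first by case: j.
case: j => [|j] //=.
case: s IH => [|y s] IH //=.
case=> h1 h2; case: j => [|j] //=; split => //.
by have := IH j.+1 h2.
Qed.

Lemma walk_lnk n (T : seq (ind n)) v ls : walk T v ls -> lnk ls.
Proof.
elim: ls v => [|l ls IH] v //=; case=> _ _ _ hw.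
case: ls IH hw => [|l' ls] IH hw //=; split; last exact: IH hw.
by case: hw.
Qed.

Lemma walk_rcons n (T : seq (ind n)) v ls l : walk T v (rcons ls l) <->
  walk T v ls /\ [/\ is_arrow T (larr l), lfrom l = last v (map (@lto n) ls) & lto l \in T].
Proof.
elim: ls v => [|l0 ls IH] v /=.
- split; first by case=> h1 h2 h3 h4.
  by case=> h1 [h2 h3 h4]; split.
- split.
  + by case=> h1 h2 h3 /IH [h4 h5].
  + by case=> [[h1 h2 h3 h4] h5]; split => //; apply/IH.
Qed.

Lemma walk_head n (T : seq (ind n)) v ls : walk T v ls -> v \in T.
Proof. by case: ls => [|l ls] //= []. Qed.

Lemma verts_rcons n v (ls : seq (letter n)) l :
  verts (Str v (rcons ls l)) = rcons (verts (Str v ls)) (lto l).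
Proof. by rewrite /verts /= map_rcons. Qed.

Lemma send_rcons n v (ls : seq (letter n)) l : send (Str v (rcons ls l)) = lto l.
Proof. by rewrite /send /= map_rcons last_rcons. Qed.

Lemma walk_noinv n (T : seq (ind n)) v ls : walk T v ls -> uniq (v :: map (@lto n) ls) -> noinv ls.
Proof.
elim: ls v => [|l ls IH] v //=.
case=> h1 h2 h3 hw /andP [hv hu].
case: ls IH hw hv hu => [|l' ls] IH hw hv hu //=.
split; last by apply: (IH (lto l)).
case=> ea ed; move: hv; rewrite !inE negb_or => /andP [_ /negP]; apply.
case: hw => _ _ h4 _.
have e : lto l' = lfrom l.
  rewrite /lto /lfrom -ea; case: (ldir l) ed; case: (ldir l') => //.
by rewrite e h3 eqxx.
Qed.

Lemma walk_letters n (T : seq (ind n)) (Q : ind n -> Prop) v ls : walk T v ls ->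
  uniq (v :: map (@lto n) ls) -> (forall Z, Z \in v :: map (@lto n) ls -> Q Z) ->
  allQ (fun l => [/\ is_arrow T (larr l), lfrom l <> lto l, Q (lfrom l) & Q (lto l)]) ls.
Proof.
elim: ls v => [|l ls IH] v //=.
case=> h1 h2 h3 hw /andP [hv hu] hQ; split.
- split => //.
  + by move=> e; move: hv; rewrite -h3 e inE eqxx.
  + by rewrite h3; apply: hQ; rewrite inE eqxx.
  + by apply: hQ; rewrite !inE eqxx orbT.
- apply: (IH (lto l)) => // Z hZ; apply: hQ; by rewrite inE hZ orbT.
Qed.

Definition cont n (p : nat) (Y : ind n) := Y.1 <= p < Y.1 + Y.2.

Definition goodL n (p : nat) (l : letter n) : Prop :=
  [/\ cont p (asrc (larr l)), cont p (atgt (larr l)) &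
     if ldir l then amap (larr l) = (true, (asrc (larr l)).1 - (atgt (larr l)).1) /\
                   (atgt (larr l)).1 <= (asrc (larr l)).1
     else amap (larr l) = (true, 0)].

Lemma PCdir n (p : nat) (s : seq (letter n)) l : lnk (l :: s) -> all (@ldir n) (l :: s) ->
  allQ (goodL p) (l :: s) ->
  pathcomp (larr l) (map (@larr n) s) =
    Some (true, (asrc (larr l)).1 - (atgt (larr (last l s))).1) /\
  (atgt (larr (last l s))).1 <= (asrc (larr l)).1.
Proof.
elim: s l => [|l' s IH] l /=.
- move=> _ /andP [dl _] [[h1 h2 h3] _]; rewrite dl in h3; case: h3 => h3 h4.
  by rewrite h3.
- case=> hl hlk /andP [dl hd] [gl hg].
  have [IH1 IH2] := IH l' hlk hd hg.
  rewrite IH1 -last_map.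
  have [c1 c2 c3] := gl; rewrite dl in c3; case: c3 => c3 c4.
  have gL := allQ_last hg; case: gL => _ d2 _.
  have e : atgt (larr l) = asrc (larr l').
    by move: hl; rewrite /lto /lfrom dl; move: hd => /andP [-> _].
  rewrite last_map c3 /Defs.comp /=.
  move: c1 c2 d2 IH2; rewrite /cont e => c1 c2 d2 IH2.
  rewrite e in c4.
  rewrite last_map ifT; last lia.
  split; [do 2 f_equal; lia | lia].
Qed.

Lemma PCinv n (ps : seq (arrow n)) a :
  allQ (fun b => amap b = (true, 0) /\ 0 < (atgt b).2) (a :: ps) -> pathcomp a ps = Some (true, 0).
Proof.
elim: ps a => [|b ps IH] a /=; first by case=> [[-> _]].
case=> [[ea _] hb]; rewrite IH // ea /Defs.comp /=.
have [_ h] := allQ_last hb; by rewrite h.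
Qed.

Lemma inv_arrows n (p : nat) (s : seq (letter n)) : all (fun l => ~~ ldir l) s -> allQ (goodL p) s ->
  allQ (fun b => amap b = (true, 0) /\ 0 < (atgt b).2) (map (@larr n) s).
Proof.
elim: s => [|l s IH] //= /andP [dl hd] [[c1 c2 c3] hg]; split; last exact: IH.
by move: c3; rewrite (negbTE dl) => ->; split => //; move: c2; rewrite /cont; lia.
Qed.

Lemma nozeroI n (p : nat) (ls : seq (letter n)) : lnk ls -> allQ (goodL p) ls -> nozero ls.
Proof.
move=> hl hg i j /=; set seg := take j (drop i ls).
have hl' : lnk seg by apply: lnk_take; apply: lnk_drop.
have hg' : allQ (goodL p) seg by apply: allQ_take; apply: allQ_drop.
split.
- case: seg hl' hg' => [|l s] //= hl' hg' hd.
  by rewrite (proj1 (PCdir hl' hd hg')).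
- move=> hd; rewrite -map_rev.
  have hr := allQ_rev hg'; have hd' : all (fun l => ~~ ldir l) (rev seg) by rewrite all_rev.
  have := inv_arrows hd' hr.
  case: (rev seg) => [|l s] //= h.
  by rewrite (PCinv h).
Qed.

Definition core n (T : seq (ind n)) (P : pred (ind n)) (Y : ind n) (s : str n) :=
  [/\ walk T (sstart s) (sletters s), uniq (verts s),
      (forall Z : ind n, Z \in verts s <-> Z \in T /\ P Z) & send s = Y].

Lemma sub_eq n (A B : ind n) : sub A B -> B.2 <= A.2 -> A = B.
Proof. by rewrite /sub => h1 h2; apply: ind_eq; lia. Qed.

Lemma nested_le n (T : seq (ind n)) T1 p (A B : ind n) : setup T T1 -> A \in T -> B \in T ->
  cont p A -> cont p B -> A.2 <= B.2 -> sub A B.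
Proof.
move=> hs hA hB ca cb hl; case: (nested hs hA hB ca cb) => // h.
by rewrite (sub_eq h hl) /sub; lia.
Qed.

Lemma exists_max n (P : pred (ind n)) (s : seq (ind n)) : has P s ->
  exists2 Y : ind n, Y \in s & P Y /\ (forall Z : ind n, Z \in s -> P Z -> Z.2 <= Y.2).
Proof.
elim: s => [|x s IH] //= /orP [hx|hs].
- case: (boolP (has P s)) => [/IH [Y hY [hPY hm]]|hn].
  + case: (leqP x.2 Y.2) => hle.
    * exists Y; first by rewrite inE hY orbT.
      split => // Z; rewrite inE => /orP [/eqP -> //|]; exact: hm.
    * exists x; first by rewrite inE eqxx.
      split => // Z; rewrite inE => /orP [/eqP -> //|] hZ hPZ.
      by have := hm Z hZ hPZ; lia.
  + exists x; first by rewrite inE eqxx.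
    split => // Z; rewrite inE => /orP [/eqP -> //|] hZ hPZ.
    by move/hasPn: hn => /(_ Z hZ); rewrite hPZ.
- have [Y hY [hPY hm]] := IH hs.
  case: (leqP x.2 Y.2) => hle.
  + exists Y; first by rewrite inE hY orbT.
    split => // Z; rewrite inE => /orP [/eqP -> //|]; exact: hm.
  + case: (boolP (P x)) => hPx.
    * exists x; first by rewrite inE eqxx.
      split => // Z; rewrite inE => /orP [/eqP -> //|] hZ hPZ.
      by have := hm Z hZ hPZ; lia.
    * exists Y; first by rewrite inE hY orbT.
      split => // Z; rewrite inE => /orP [/eqP e|]; last exact: hm.
      by rewrite e (negbTE hPx).
Qed.

Lemma count_split (T : Type) (a b : pred T) s :
  count a s = count (fun x => a x && b x) s + count (fun x => a x && ~~ b x) s.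
Proof. by elim: s => //= x s ->; case: (a x); case: (b x) => /=; lia. Qed.

Lemma core_single n (T : seq (ind n)) P (Y : ind n) s : core T P Y s ->
  (forall Z : ind n, Z \in verts s -> Z = Y) -> s = Str Y [::].
Proof.
case: s => v ls [hw hu hv he] h.
have ev : v = Y by apply: h; rewrite inE eqxx.
subst v; case: ls hw hu hv he h => [|l ls] //= hw hu hv he h.
have el : lto l = Y by apply: h; rewrite !inE eqxx orbT.
by move: hu; rewrite el inE eqxx.
Qed.

Lemma canon_good n (p : nat) (A B : ind n) : cont p A -> cont p B -> sub A B ->
  goodL p (canon A B).
Proof.
move=> ca cb hs; rewrite /canon; case: eqP => e /=; split => //.
by rewrite /=; split => //; move: hs; rewrite /sub; lia.
Qed.

Lemma consec_of n (T : seq (ind n)) T1 (A B : ind n) (l : letter n) : setup T T1 ->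
  A \in T -> B \in T -> sub A B -> A <> B -> is_arrow T (larr l) ->
  lfrom l = A -> lto l = B -> consec T A B.
Proof.
move=> hs hA hB hsub hne ha hf ht.
have el := letter_char hs hA hB hsub hne ha hf ht.
move: ha; rewrite el /canon; case: eqP => e /= ha.
- exact: G3a hs ha hsub hne.
- exact: G3b hs ha hsub (fun x => hne (esym x)).
Qed.

Lemma CI n (T : seq (ind n)) T1 (p : nat) (m : nat) : setup T T1 ->
  forall (P : pred (ind n)) (Y : ind n),
  size (filter P T) <= m ->
  (forall Z : ind n, Z \in T -> P Z -> cont p Z) ->
  (forall U V Z : ind n, U \in T -> V \in T -> Z \in T -> P U -> P V -> sub U Z -> sub Z V -> P Z) ->
  Y \in T -> P Y -> (forall Z : ind n, Z \in T -> P Z -> Z.2 <= Y.2) ->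
  (exists s, core T P Y s /\ allQ (goodL p) (sletters s)) /\
  (forall s1 s2, core T P Y s1 -> core T P Y s2 -> s1 = s2).
Proof.
move=> hs; elim: m => [|m IH] P Y hsz hc hconv hY hPY hmax.
  exfalso; have : Y \in filter P T by rewrite mem_filter hPY hY.
  by case: (filter P T) hsz.
case: (boolP (has (fun Z => P Z && (Z != Y)) T)) => [hh|hnh]; last first.
  move/hasPn: hnh => hn.
  have hv : forall Z : ind n, Z \in T -> P Z -> Z = Y.
    by move=> Z hZ hPZ; have := hn Z hZ; rewrite hPZ /= negbK => /eqP.
  split.
  - exists (Str Y [::]); split => //; split => //.
    + move=> Z; rewrite /verts /= inE; split; first by move/eqP ->.
      by case=> hZ hPZ; rewrite (hv Z hZ hPZ).
  - move=> s1 s2 h1 h2.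
    suff hh : forall s0, core T P Y s0 -> s0 = Str Y [::].
      by rewrite (hh s1 h1) (hh s2 h2).
    move=> s0 h0; apply: (core_single h0) => Z hZ.
    case: h0 => _ _ hv0 _; have [a b] := proj1 (hv0 Z) hZ.
    exact: hv Z a b.
set P' := fun Z => P Z && (Z != Y).
have [Y' hY' [hPY' hmax']] := exists_max hh.
have hsz' : size (filter P' T) <= m.
  move: hsz; rewrite !size_filter (count_split P (fun Z => Z != Y)).
  have : 0 < count (fun x => P x && ~~ (x != Y)) T.
    by rewrite -has_count; apply/hasP; exists Y => //; rewrite hPY eqxx.
  rewrite /P'; lia.
have hc' : forall Z : ind n, Z \in T -> P' Z -> cont p Z.
  by move=> Z hZ /andP [hPZ _]; exact: hc.
have [PY'a PY'b] := andP hPY'.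
have hconv' : forall U V Z : ind n, U \in T -> V \in T -> Z \in T -> P' U -> P' V ->
    sub U Z -> sub Z V -> P' Z.
  move=> U V Z hU hV hZ /andP [hPU _] /andP [hPV hVY] h1 h2.
  rewrite /P' (hconv U V Z) //=; apply/eqP => eZ; subst Z.
  have := hmax V hV hPV => hl.
  by move/eqP: hVY; apply; apply: esym; apply: sub_eq.
have [[s' [hcore' hgood']] huniq'] := IH P' Y' hsz' hc' hconv' hY' hPY' hmax'.
have cY := hc Y hY hPY; have cY' := hc Y' hY' PY'a.
have neY : Y' <> Y by move/eqP: PY'b.
have hsub : sub Y' Y by apply: (nested_le hs hY' hY cY' cY); apply: hmax.
have hcons : consec T Y' Y.
  move=> W hW h1 h2.
  have hPW : P W by apply: (hconv Y' Y W).
  case: (eqVneq W Y) => [->|nWY]; first by right.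
  have hl := hmax' W hW ltac:(by rewrite /P' hPW nWY).
  by left; move: h1; rewrite /sub; lia.
have [cf ct ca] := canon_ok hs hY' hY hsub neY hcons.
set l := canon Y' Y.
set s := Str (sstart s') (rcons (sletters s') l).
have hcore : core T P Y s.
  case: hcore' => hw hu hvs hse.
  split.
  - apply/walk_rcons; split => //; split => //.
    + by rewrite cf -hse.
    + by rewrite ct.
  - rewrite /s verts_rcons rcons_uniq hu andbT ct.
    by apply/negP => /hvs [_ /andP [_ /eqP]].
  - move=> Z; rewrite /s verts_rcons mem_rcons inE ct; split.
    + case/orP => [/eqP ->|/hvs [hZ /andP [hPZ _]]] //.
    + case=> hZ hPZ; case: (eqVneq Z Y) => [-> //|nZ].
      by apply/orP; right; apply/hvs; split => //; rewrite /P' hPZ nZ.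
  - by rewrite /s send_rcons ct.
split.
  exists s; split => //; rewrite /s /=; apply/allQ_rcons; split => //.
  exact: canon_good.
suff hall : forall s1, core T P Y s1 -> s1 = s.
  by move=> s1 s2 h1 h2; rewrite (hall s1 h1) (hall s2 h2).
case=> v ls [hw hu hvs hse].
case/lastP: ls hw hu hvs hse => [|ls0 l0] hw hu hvs hse.
  exfalso; move: (proj2 (hvs Y') (conj hY' PY'a)); rewrite /verts /= inE => /eqP e.
  by apply: neY; rewrite e -hse.
rewrite send_rcons in hse.
move/walk_rcons: hw => [hw0 [ha0 hf0 ht0]].
rewrite verts_rcons rcons_uniq in hu; case/andP: hu => hn0 hu0.
have hvs0 : forall Z : ind n, Z \in verts (Str v ls0) <-> Z \in T /\ P' Z.
  move=> Z; split.
  - move=> hZ; have : Z \in verts (Str v (rcons ls0 l0)) by rewrite verts_rcons mem_rcons inE hZ orbT.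
    move/hvs => [hZT hPZ]; split => //; rewrite /P' hPZ /=.
    by apply/eqP => eZ; move: hn0; rewrite hse -eZ hZ.
  - case=> hZ /andP [hPZ nZ].
    have : Z \in verts (Str v (rcons ls0 l0)) by apply/hvs.
    by rewrite verts_rcons mem_rcons inE hse (negbTE nZ).
set A := lfrom l0.
have hA : A \in verts (Str v ls0) by rewrite /A hf0 /verts mem_last.
have [hAT hPA'] := proj1 (hvs0 A) hA.
have [hPA nAY] := andP hPA'.
have cA := hc A hAT hPA.
have neA : A <> Y by move/eqP: nAY.
have hsubA : sub A Y by apply: (nested_le hs hAT hY cA cY); apply: hmax.
have hconsA : consec T A Y by apply: (consec_of hs hAT hY hsubA neA ha0) => //.
have eA : A = Y'.
  case: (eqVneq A Y') => // nA; exfalso.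
  have hsubA' : sub A Y' by apply: (nested_le hs hAT hY' cA cY'); apply: hmax'.
  have := hconsA Y' hY' hsubA' hsub.
  case=> [[x1 x2]|[x1 x2]].
  - by move/eqP: nA; apply; apply: ind_eq.
  - by apply: neY; apply: ind_eq.
have hcore0 : core T P' Y' (Str v ls0).
  by split => //; rewrite /send /= -hf0.
have e0 := huniq' _ _ hcore0 hcore'.
have el := letter_char hs hY' hY hsub neY ha0 eA hse.
by rewrite /s -e0 /= el.
Qed.

Lemma self_ext n (Z : ind n) s : 2 <= n -> homT_idx Z (tau Z) s -> n.-1 < Z.2.
Proof.
move=> hn /homT_iff [h1 h2 h3]; rewrite tau1 in h2.
have : (Z.1 + s == Z.1 + n.-1 %[mod n]) by apply/eqP.
rewrite eqn_modDl (@modn_small n.-1); last lia.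
move/eqP => e; have := leq_mod s n; lia.
Qed.

Lemma noself n (Z : ind n) : 2 <= n -> Z.2 <= n.-1 -> ~ ext1_nz Z Z.
Proof.
move=> hn hl; rewrite /ext1_nz /homC_nz; case=> [[[] s] h]; rewrite /isbasis /= in h.
- by have := self_ext hn h; lia.
- have h' := proj2 (homT_tau Z (tau Z) s) h.
  by have := self_ext hn h'; lia.
Qed.

Lemma inR_of n (X W : ind n) m : valid W -> isbasis W X m -> inR X W.
Proof.
case: m => [[] s] hv hb; [left|right]; split => //; by exists s.
Qed.

Lemma inRk_char n (T : seq (ind n)) T1 k (X Z : ind n) : setup T T1 -> Z \in T ->
  (inRk k X Z <-> Pb k X Z).
Proof.
move=> hs hZ; have wZ := Tw hs hZ; case: (hs) => hn _ _ _ _.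
rewrite -(Pb_char k X hn wZ); split; first by case.
by move=> h; split => //; case: wZ.
Qed.

Lemma allQ_all n (R : letter n -> Prop) (f : letter n -> bool) ls :
  allQ R ls -> (forall l, R l -> f l) -> all f ls.
Proof. by elim: ls => [|l ls IH] //= [h1 h2] h; rewrite h // IH. Qed.

Theorem lemma4p4 (n : nat) (T : seq (ind n)) (k : bool) (X : ind n) :
  2 <= n -> maxrigid T ->
  (exists T1, [/\ T1 \in T, val T1.1 = 0 & T1.2 = n.-1]) ->
  inF X ->
  [/\ (* (i) *)
      ((forall Y, Y \in T -> ~ inR X Y) <-> (exists Y, Y \in T /\ X = tau Y)),
      (* (ii) *)
      (forall Ti Tj Tk, T_subwing T Ti Tj Tk -> ~ (optR k X Tj /\ optR k X Tk)) &
      (* (iii) and (iv) *)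
      ((exists Y, Y \in T /\ inRk k X Y) ->
       forall Y, Y \in T -> inRk k X Y ->
         (forall Z, Z \in T -> inRk k X Z -> Z.2 <= Y.2) ->
         (exists! s, good_string T k X Y s) /\
         (forall s, good_string T k X Y s -> no_D_letter s))].
Proof.
move=> hn hmr [T1 [hT1 e1 e2]] [hXv hF].
have hs : setup T T1 by [].
have wT1 : wing T1 by rewrite /wing e1 e2; split; lia.
have [hu hvT hr hm] := hmr.
split.
-
  split.
  + move=> hno.
    case: (leqP X.2 n.-1) => hb.
    * pose Y : ind n := (shift X.1 1, X.2).
      have eY : tau Y = X.
        apply: ind_eq => //=; rewrite modnDml.
        have -> : X.1 + 1 + n.-1 = X.1 + n by lia.
        by rewrite modnDr modn_small.
      have extW : forall W : ind n, W \in T -> ~ ext1_nz W Y.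
        move=> W hW; rewrite /ext1_nz eY; case=> m hbm.
        apply: (hno W hW); apply: (inR_of (m := m)) => //.
        by move/allP: hvT => /(_ W hW).
      exists Y; split => //.
      apply: hm; first by [].
      - move=> W hW; split; first exact: extW.
        by move/ext_sym; apply: extW.
      - exact: noself.
    * exfalso; apply: (hno T1 hT1); left; split; first by rewrite /valid e2; lia.
      exists X.1; case: wT1 => _ w2; rewrite /isbasis /=; apply/(homT_wing _ _ w2).
      have := ltn_ord X.1; rewrite e1 e2; split; lia.
  + case=> Y [hY ->] W hW hR; apply: (hr W Y hW hY).
    by case: hR => [[_ [s h]]|[_ [s h]]]; [exists (true, s) | exists (false, s)].
-
  move=> Ti Tj Tk [hsw [hTi [hTj hTk]]] [hj hk].
  case: hsw => [[c [/andP [hb1 hb2] /andP [hc1 hc2] ej ek]]|[_ [[ej ek]|[ej ek]]]];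
    subst; rewrite /= in hj hk hTj hTk => //.
  have [wi1 wi2] := Tw hs hTi.
  move/(inRk_char k X hs hTj)/Pb_pt: hj => /= hj.
  move/(inRk_char k X hs hTk)/Pb_pt: hk => /= hk.
  rewrite modn_small in hk; lia.
-
  move=> _ Y hY hRY hmaxY.
  set P := Pb k X.
  have hchar : forall Z : ind n, Z \in T -> (inRk k X Z <-> P Z).
    by move=> Z hZ; apply: inRk_char hs hZ.
  have hcont : forall Z : ind n, Z \in T -> P Z -> cont (pt k X) Z.
    by move=> Z hZ hPZ; apply: Pb_pt.
  have [[s [hcore hgood]] huniq] :=
    @CI n T T1 (pt k X) (size (filter P T)) hs P Y (leqnn _) hcont
      (fun U V Z _ _ _ hU hV h1 h2 => Pb_conv hU hV h1 h2) hY (proj1 (hchar Y hY) hRY)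
      (fun Z hZ hPZ => hmaxY Z hZ (proj2 (hchar Z hZ) hPZ)).
  have good_core : forall s0, good_string T k X Y s0 -> core T P Y s0.
    move=> s0 [[hw _ _] hu0 hv0 he0]; split => // Z.
    by rewrite hv0; split; case=> hZ h; split => //; apply/(hchar Z hZ).
  split.
  + exists s; split.
    * case: hcore => hw hu0 hv0 he0; split => //.
      - split => //; first exact: walk_noinv hw hu0.
        exact: nozeroI (walk_lnk hw) hgood.
      - by move=> Z; rewrite hv0; split; case=> hZ h; split => //; apply/(hchar Z hZ).
    * by move=> s' /good_core hs'; apply: huniq.
  + move=> s0 /good_core [hw hu0 hv0 he0].
    have := walk_letters (Q := fun Z => Z \in T /\ P Z) hw hu0 (fun Z hZ => proj1 (hv0 Z) hZ).
    move=> hall; apply: (allQ_all hall) => l [ha hne [hfT hfP] [htT htP]].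
    have cf := hcont _ hfT hfP; have ct := hcont _ htT htP.
    have hnest := nested hs hfT htT cf ct.
    move: ha hne hnest; rewrite /lfrom /lto; case: (ldir l) => ha hne hnest.
    * by apply: (G3D hs ha); [case: hnest; [right|left] | move=> e; apply: hne].
    * exact: (G3D hs ha hnest hne).
Qed.
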